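(* Let the alphabet be countable, $\varphi_1,\dots,\varphi_n$ sentences, $\mu_0:\{\varphi_1,\dots,\varphi_n\}\to[0,1]$, and $\xi$ a probability on sentences. Suppose $\mu_0$ can be extended to a probability on sentences, and $\xi(\psi_S)>0$ for every $S\subseteq\{1,\dots,n\}$ with $\psi_S$ satisfiable. Then the probability $\hat\mu$ minimally more informative than $\xi$ given $\mu_0$ is the unique minimizer of the relative entropy with respect to $\xi$ under the constraints $\mu(\varphi_i)=\mu_0(\varphi_i)$, $i=1,\dots,n$, and $$\min_{\mu:\ \mu(\varphi_i)=\mu_0(\varphi_i),\,i=1..n}\mathrm{KL}(\mu\|\xi)=\mathrm{KL}(\hat\mu\|\xi)=\sum_{S\subseteq\{1,\dots,n\}}\hat\mu(\psi_S)\log\frac{\hat\mu(\psi_S)}{\xi(\psi_S)}=\sum_{i=1}^n\lambda_i\mu_0(\varphi_i)-\log\Phi(\lambda).$$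
   Context: Setting: higher-order logic (Church's simple theory of types, without a description operator), with Henkin semantics; an alphabet is countable if its set of constants is countable. Sentences are closed terms of type $o$; $\mathcal S$ is the set of sentences. A sentence is valid if true in every interpretation, satisfiable if it has a model. A probability on sentences is a non-negative $\mu:\mathcal S\to\mathbb R$ with $\mu(\varphi)=1$ for valid $\varphi$ and $\mu(\varphi\vee\psi)=\mu(\varphi)+\mu(\psi)$ whenever $\neg(\varphi\wedge\psi)$ is valid. For $S\subseteq\{1,\dots,n\}$, $\psi_S:=(\bigwedge_{i\in S}\varphi_i)\wedge(\bigwedge_{j\in\{1,\dots,n\}\setminus S}\neg\varphi_j)$. The probability $\hat\mu$ minimally more informative than $\xi$ given $\mu_0$ is defined by $\hat\mu(\varphi)=\sum_{S}w_S\,\xi(\varphi\wedge\psi_S)$ with $w_S=\exp(\sum_{j\in S}\lambda_j)/\Phi(\lambda)$, $\Phi(\lambda)=\sum_{S}\exp(\sum_{j\in S}\lambda_j)\,\xi(\psi_S)$, where $\lambda_1,\dots,\lambda_n\in\mathbb R\cup\{-\infty\}$ solve $\mu_0(\varphi_i)=\sum_{S\ni i}w_S\,\xi(\psi_S)$ for $i=1,\dots,n$. Relative entropy: for an enumeration $\phi_1,\phi_2,\dots$ of all sentences and $\psi_{m,T}:=(\bigwedge_{i\in T}\phi_i)\wedge(\bigwedge_{j\in\{1,\dots,m\}\setminus T}\neg\phi_j)$, $\mathrm{KL}(\mu\|\xi):=\lim_{m\to\infty}\sum_{T\subseteq\{1,\dots,m\}}\mu(\psi_{m,T})\log\frac{\mu(\psi_{m,T})}{\xi(\psi_{m,T})}$,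 with conventions $0\log\frac0x=0$ and $y\log\frac y0=\infty$ for $y>0$ (the limit exists and is independent of the enumeration). *)

(* Defs.v *)
From HB Require Import structures.
From mathcomp Require Import all_boot all_order all_algebra.
From mathcomp Require Import all_classical all_reals all_analysis.
Set Implicit Arguments. Unset Strict Implicit. Unset Printing Implicit Defensive.
Import Order.TTheory GRing.Theory Num.Theory.

(* Church's simple type theory (no description operator).             *)
Inductive ty : Type := To | Ti | Tarr (a b : ty).

Inductive var : list ty -> ty -> Type :=
| vz (G : list ty) (a : ty) : var (a :: G) a
| vs (G : list ty) (a b : ty) : var G a -> var (b :: G) a.

Inductive tm (C : Type) (ctype : C -> ty) : list ty -> ty -> Type :=
| hvar (G : list ty) (a : ty) : var G a -> tm ctype G a
| hcon (G : list ty) (c : C) : tm ctype G (ctype c)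
| happ (G : list ty) (a b : ty) : tm ctype G (Tarr a b) -> tm ctype G a -> tm ctype G b
| hlam (G : list ty) (a b : ty) : tm ctype (a :: G) b -> tm ctype G (Tarr a b)
| hneg (G : list ty) : tm ctype G (Tarr To To)
| hor  (G : list ty) : tm ctype G (Tarr To (Tarr To To))
| hpi  (G : list ty) (a : ty) : tm ctype G (Tarr (Tarr a To) To).

Definition sent (C : Type) (ctype : C -> ty) := tm ctype nil To.

Section Connectives.
Variables (C : Type) (ctype : C -> ty).
Definition sNot (s : sent ctype) : sent ctype := happ (hneg ctype nil) s.
Definition sOr (s t : sent ctype) : sent ctype := happ (happ (hor ctype nil) s) t.
Definition sAnd (s t : sent ctype) : sent ctype := sNot (sOr (sNot s) (sNot t)).
(* falsum := Pi_o (lambda p. p), verum := ~ falsum *)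
Definition sTop : sent ctype :=
  sNot (happ (hpi ctype nil To) (hlam (hvar ctype (vz nil To)))).
End Connectives.

(* Henkin semantics (Andrews' general models).                         *)
Record frame := Frame {
  dom : ty -> Type;
  app : forall a b, dom (Tarr a b) -> dom a -> dom b;
  app_ext : forall a b (f g : dom (Tarr a b)), (forall x, app f x = app g x) -> f = g;
  tv : dom To -> bool;
  tv_bij : bijective tv;
  dom_i_inh : inhabited (dom Ti) }.

Fixpoint env (F : frame) (G : list ty) : Type :=
  match G with nil => unit | a :: G' => (dom F a * env F G')%type end.

Fixpoint lookup (F : frame) (G : list ty) (a : ty) (x : var G a) : env F G -> dom F a :=
  match x in var G a return env F G -> dom F a with
  | vz _ _ => fun e => e.1
  | vs _ _ _ x' => fun e => lookup x' e.2
  end.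

Record model (C : Type) (ctype : C -> ty) := Model {
  mfr : frame;
  J : forall c : C, dom mfr (ctype c);
  V : forall G a, tm ctype G a -> env mfr G -> dom mfr a;
  V_var : forall G a (x : var G a) e, V (hvar ctype x) e = lookup x e;
  V_con : forall G c e, V (hcon ctype G c) e = J c;
  V_app : forall G a b (f : tm ctype G (Tarr a b)) t e,
      V (happ f t) e = app (V f e) (V t e);
  V_lam : forall G a b (t : tm ctype (a :: G) b) e d,
      app (V (hlam t) e) d = V t (d, e);
  V_neg : forall G e p, tv (app (V (hneg ctype G) e) p) = ~~ tv p;
  V_or : forall G e p q, tv (app (app (V (hor ctype G) e) p) q) = tv p || tv q;
  V_pi : forall G a e f,
      tv (app (V (hpi ctype G a) e) f) = true <-> (forall x, tv (app f x) = true) }.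

Definition truth C (ctype : C -> ty) (M : model ctype) (s : sent ctype) : Prop :=
  tv (@V C ctype M nil To s tt) = true.

Definition valid C (ctype : C -> ty) (s : sent ctype) : Prop :=
  forall M : model ctype, truth M s.

Definition satisfiable C (ctype : C -> ty) (s : sent ctype) : Prop :=
  exists M : model ctype, truth M s.

Definition countable_alphabet (C : Type) : Prop := exists f : C -> nat, injective f.

Local Open Scope ring_scope.

Definition is_prob (R : realType) C (ctype : C -> ty) (mu : sent ctype -> R) : Prop :=
  [/\ forall s, 0 <= mu s,
      forall s, valid s -> mu s = 1
    & forall s t, valid (sNot (sAnd s t)) -> mu (sOr s t) = mu s + mu t].

(* psi_S = /\_{i in S} phi_i /\ /\_{j notin S} ~ phi_j  (right-nested,   *)
(* terminated by verum; equivalent to the paper's conjunction)          *)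
Definition lit C (ctype : C -> ty) (s : sent ctype) (b : bool) : sent ctype :=
  if b then s else sNot s.

Definition psi C (ctype : C -> ty) (n : nat) (phi : 'I_n -> sent ctype)
  (S : {set 'I_n}) : sent ctype :=
  \big[@sAnd C ctype/sTop ctype]_(i < n) lit (phi i) (i \in S).

Definition expE (R : realType) (x : \bar R) : R :=
  if x is r%:E then expR r else 0.

Section MinInfo.
Variables (R : realType) (C : Type) (ctype : C -> ty) (n : nat).
Variables (xi : sent ctype -> R) (phi : 'I_n -> sent ctype) (lam : 'I_n -> \bar R).

Definition Phi : R :=
  \sum_(S : {set 'I_n}) expE (\sum_(j in S) lam j)%E * xi (psi phi S).

Definition wS (S : {set 'I_n}) : R := expE (\sum_(j in S) lam j)%E / Phi.

Definition mu_hat (s : sent ctype) : R :=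
  \sum_(S : {set 'I_n}) wS S * xi (sAnd s (psi phi S)).
End MinInfo.

Definition klterm (R : realType) (y x : R) : \bar R :=
  if y == 0 then 0%E else if x == 0 then +oo%E else (y * ln (y / x))%:E.

Definition KLpart (R : realType) C (ctype : C -> ty) (e : nat -> sent ctype)
  (mu xi : sent ctype -> R) (m : nat) : \bar R :=
  (\sum_(T : {set 'I_m})
     klterm (mu (psi (fun i : 'I_m => e i) T)) (xi (psi (fun i : 'I_m => e i) T)))%E.

Definition KL (R : realType) C (ctype : C -> ty) (e : nat -> sent ctype)
  (mu xi : sent ctype -> R) : \bar R :=
  limn (KLpart e mu xi).

(* Main.v *)
Require Import Defs.
From HB Require Import structures.
From mathcomp Require Import all_boot all_order all_algebra.
From mathcomp Require Import all_classical all_reals all_analysis.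
From mathcomp Require Import ring lra.
Import Order.TTheory GRing.Theory Num.Theory.
Local Open Scope ring_scope.
Set Implicit Arguments. Unset Strict Implicit. Unset Printing Implicit Defensive.

Section Sem.
Variables (C : Type) (ctype : C -> ty).
Implicit Types (M : model ctype) (s t : sent ctype).

Definition tr M s : bool := tv (@V C ctype M nil To s tt).

Lemma trNot M s : tr M (sNot s) = ~~ tr M s.
Proof. by rewrite /tr /sNot V_app V_neg. Qed.

Lemma trOr M s t : tr M (sOr s t) = tr M s || tr M t.
Proof. by rewrite /tr /sOr !V_app V_or. Qed.

Lemma trAnd M s t : tr M (sAnd s t) = tr M s && tr M t.
Proof. by rewrite /sAnd trNot trOr !trNot negb_or !negbK. Qed.

Lemma trTop M : tr M (sTop ctype).
Proof.
rewrite /sTop trNot /tr V_app; apply/negP => /V_pi H.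
case: (tv_bij (mfr M)) => g _ gK.
have := H (g false); rewrite V_lam V_var /= gK //.
Qed.

Lemma trBig M (I : Type) (r : seq I) (P : pred I) (F : I -> sent ctype) :
  tr M (\big[@sAnd C ctype/sTop ctype]_(i <- r | P i) F i) =
  \big[andb/true]_(i <- r | P i) tr M (F i).
Proof. by apply: (big_morph (tr M)) => [x y|]; [exact: trAnd|exact: trTop]. Qed.

Lemma trPsi M m (f : 'I_m -> sent ctype) (T : {set 'I_m}) :
  tr M (psi f T) = [forall i, tr M (f i) == (i \in T)].
Proof.
rewrite /psi trBig big_andE; apply: eq_forallb => i.
by rewrite /lit; case: (i \in T); rewrite ?trNot ?eqxx //= ?eqb_id ?eqbF_neg.
Qed.

Lemma validE s : valid s <-> forall M, tr M s.
Proof. by []. Qed.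

Definition part (J : finType) (d : J -> sent ctype) :=
  (forall M j j', tr M (d j) -> tr M (d j') -> j = j') /\ (forall M, exists j, tr M (d j)).

Lemma part_psi m (f : 'I_m -> sent ctype) : part (psi f).
Proof.
split.
  move=> M T T'; rewrite !trPsi => /forallP H /forallP H'.
  by apply/setP => i; move: (H i) (H' i) => /eqP <- /eqP <-.
move=> M; exists [set i | tr M (f i)]; rewrite trPsi; apply/forallP => i.
by rewrite inE.
Qed.

Section Prob.
Variables (R : realType) (mu : sent ctype -> R).
Hypothesis (hmu : is_prob mu).

Lemma mu_ge0 s : 0 <= mu s. Proof. by case: hmu. Qed.

Lemma mu_add s t : (forall M, ~~ (tr M s && tr M t)) -> mu (sOr s t) = mu s + mu t.
Proof. case: hmu => _ _ H D; apply: H => M; rewrite /truth -/(tr M _) trNot trAnd; exact: D. Qed.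

Lemma mu_valid s : (forall M, tr M s) -> mu s = 1.
Proof. by case: hmu => _ H _ D; apply: H. Qed.

Lemma mu_equiv s t : (forall M, tr M s = tr M t) -> mu s = mu t.
Proof.
move=> E.
have h1 : mu (sOr s (sNot t)) = mu s + mu (sNot t).
  by apply: mu_add => M; rewrite trNot E; case: (tr M t).
have h2 : mu (sOr t (sNot t)) = mu t + mu (sNot t).
  by apply: mu_add => M; rewrite trNot; case: (tr M t).
have v1 : mu (sOr s (sNot t)) = 1 by apply: mu_valid => M; rewrite trOr trNot E orbN.
have v2 : mu (sOr t (sNot t)) = 1 by apply: mu_valid => M; rewrite trOr trNot orbN.
by apply: (addIr (mu (sNot t))); rewrite -h1 -h2 v1 v2.
Qed.

Lemma mu_unsat s : (forall M, ~~ tr M s) -> mu s = 0.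
Proof.
move=> U.
have h : mu (sOr s s) = mu s + mu s by apply: mu_add => M; rewrite (negbTE (U M)).
have e : mu (sOr s s) = mu s by apply: mu_equiv => M; rewrite trOr orbb.
by move: h; rewrite e => /eqP; rewrite -subr_eq0 opprD addrA subrr add0r oppr_eq0 => /eqP.
Qed.

Definition bigOr (J : Type) (g : J -> sent ctype) (r : seq J) : sent ctype :=
  foldr (fun j acc => sOr (g j) acc) (sNot (sTop ctype)) r.

Lemma trBigOr M (J : Type) (g : J -> sent ctype) r :
  tr M (bigOr g r) = has (fun j => tr M (g j)) r.
Proof. elim: r => [|j r IH]; rewrite /bigOr /=; first by rewrite trNot trTop. by rewrite trOr -/(bigOr g r) IH. Qed.

Lemma mu_bigOr (J : eqType) (g : J -> sent ctype) r :
  uniq r -> (forall M j j', tr M (g j) -> tr M (g j') -> j = j') ->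
  mu (bigOr g r) = \sum_(j <- r) mu (g j).
Proof.
move=> U D; elim: r U => [|j r IH] /=.
  by move=> _; rewrite big_nil; apply: mu_unsat => M; rewrite trNot trTop.
move=> /andP[jr U]; rewrite big_cons -IH //; apply: mu_add => M.
rewrite trBigOr; apply/negP => /andP[Hj /hasP[j' j'r Hj']].
by move: jr; rewrite (D M j j' Hj Hj') j'r.
Qed.

Lemma decomp (J : finType) (d : J -> sent ctype) s :
  part d -> mu s = \sum_j mu (sAnd s (d j)).
Proof.
move=> [D1 D2].
rewrite -big_enum /= -mu_bigOr ?enum_uniq //.
  apply: mu_equiv => M; rewrite trBigOr; apply/idP/hasP.
    by move=> Hs; case: (D2 M) => j Hj; exists j; rewrite ?mem_enum // trAnd Hs.
  by case=> j _; rewrite trAnd => /andP[].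
by move=> M j j'; rewrite !trAnd => /andP[_ h] /andP[_ h']; exact: D1 h h'.
Qed.

Lemma refine_sum (I J : finType) (c : I -> sent ctype) (d : J -> sent ctype) (r : J -> I) :
  part c -> part d -> (forall M j, tr M (d j) -> tr M (c (r j))) ->
  forall i, mu (c i) = \sum_(j | r j == i) mu (d j).
Proof.
move=> Pc Pd H i; rewrite (decomp (c i) Pd) [RHS]big_mkcond /=; apply: eq_bigr => j _.
case: eqP => [<-|ne].
  by apply: mu_equiv => M; rewrite trAnd; case E: (tr M (d j)); rewrite ?andbT ?andbF // H.
apply: mu_unsat => M; rewrite trAnd; apply/negP => /andP[h1 h2].
by apply: ne; apply: (proj1 Pc M) (H M j h2) h1.
Qed.

Lemma mu_le s t : (forall M, tr M s -> tr M t) -> mu s <= mu t.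
Proof.
move=> H.
have P2 : part (fun b : bool => if b then s else sNot s).
  split; first by move=> M [] [] //=; rewrite trNot; case: (tr M s).
  
  by move=> M; case E: (tr M s); [exists true|exists false; rewrite trNot E].
rewrite (decomp t P2) big_bool /=.
rewrite (@mu_equiv (sAnd t s) s); last by move=> M; rewrite trAnd; case E: (tr M s); rewrite ?andbT ?andbF // H.
by rewrite lerDl mu_ge0.
Qed.

End Prob.
End Sem.


Section Real.
Variable R : realType.
Implicit Types a b k x : R.

Lemma ln_le_sub1 x : 0 < x -> ln x <= x - 1.
Proof. by move=> x0; rewrite lerBrDl -{2}(lnK (x:=x)) ?posrE // expR_ge1Dx. Qed.

Lemma ln_lt_sub1 x : 0 < x -> x != 1 -> ln x < x - 1.
Proof.
move=> x0 x1; rewrite ltrBrDl -{2}(lnK (x:=x)) ?posrE // expR_gt1Dx //.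
by rewrite ln_eq0.
Qed.

Lemma term_ineq a b k : 0 <= a -> 0 <= b -> (0 < a -> 0 < b) -> 0 < k ->
  a - b * k <= a * ln (a / b) - a * ln k /\
  (a != b * k -> a - b * k < a * ln (a / b) - a * ln k).
Proof.
move=> a0 b0 ab k0.
have [->|apos] := eqVneq a 0.
  rewrite !mul0r subrr sub0r oppr_le0 oppr_lt0; split; first by rewrite mulr_ge0 // ltW.
  move=> h; rewrite mulr_gt0 // lt_def b0 andbT; apply: contraNneq h => ->; by rewrite mul0r.
have a0' : 0 < a by rewrite lt_def apos.
have b0' := ab a0'.
set x := b * k / a.
have x0 : 0 < x by rewrite /x !mulr_gt0 // invr_gt0.
have E : a * ln (a / b) - a * ln k = - (a * ln x).
  rewrite /x !ln_div ?posrE ?mulr_gt0 // lnM ?posrE //.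
  by rewrite -mulrBr -mulrN; congr (_ * _); rewrite !opprB; lra.
have F : a - b * k = - (a * (x - 1)).
  by rewrite /x mulrBr mulrCA mulfV // mulr1 opprB mulr1.
rewrite E F; split; first by rewrite lerN2 ler_wpM2l // ln_le_sub1.
move=> ne; rewrite ltrN2 ltr_pM2l // ln_lt_sub1 //.
apply: contra ne => /eqP x1; apply/eqP.
by move: x1; rewrite /x => /(congr1 (fun y => y * a)); rewrite mul1r mulfVK.
Qed.

Lemma logsum (I : finType) (P : pred I) (a b : I -> R) :
  (forall i, 0 <= a i) -> (forall i, 0 <= b i) -> (forall i, P i -> 0 < a i -> 0 < b i) ->
  0 < \sum_(i | P i) a i ->
  let A := \sum_(i | P i) a i in let B := \sum_(i | P i) b i in
  A * ln (A / B) <= \sum_(i | P i) a i * ln (a i / b i) /\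
  ((exists i, P i /\ a i * B != b i * A) ->
   A * ln (A / B) < \sum_(i | P i) a i * ln (a i / b i)).
Proof.
move=> a0 b0 ab Apos A B.
have [i0 [Pi0 ai0]] : exists i, P i /\ 0 < a i.
  apply/not_existsP => /= H; move: Apos; rewrite lt_def => /andP[/negP nz _]; apply: nz.
  rewrite psumr_eq0 //; apply/allP => i _; apply/implyP => Pi.
  by rewrite eq_le a0 andbT leNgt; apply/negP => h; apply: (H i).
have Bpos : 0 < B.
  by apply: (lt_le_trans (ab _ Pi0 ai0)); rewrite /B (bigD1 i0) //= lerDl sumr_ge0.
have k0 : 0 < A / B by rewrite divr_gt0.
have key : \sum_(i | P i) (a i - b i * (A / B)) = 0.
  rewrite sumrB -mulr_suml -/A -/B mulrCA mulfV ?mulr1 ?subrr //; exact: lt0r_neq0.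
have eq2 : \sum_(i | P i) (a i * ln (a i / b i) - a i * ln (A / B)) =
   \sum_(i | P i) a i * ln (a i / b i) - A * ln (A / B) by rewrite sumrB -mulr_suml.
split.
  rewrite -subr_ge0 -eq2 -[leLHS]key; apply: ler_sum => i Pi.
  by case: (term_ineq (a0 i) (b0 i) (ab i Pi) k0).
move=> [i [Pi ne]].
rewrite -subr_gt0 -eq2 -[ltLHS]key (bigD1 i) //= [X in _ < X](bigD1 i) //=.
apply: ltr_leD.
  case: (term_ineq (a0 i) (b0 i) (ab i Pi) k0) => _; apply.
  apply: contra ne => /eqP ->; rewrite -mulrA divfK //; exact: lt0r_neq0.
apply: ler_sum => j /andP[Pj _].
by case: (term_ineq (a0 j) (b0 j) (ab j Pj) k0).
Qed.

End Real.


Section KL.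
Variable R : realType.
Implicit Types a b : R.

Lemma klterm_fin a b : 0 <= a -> (0 < a -> 0 < b) -> klterm a b = (a * ln (a / b))%:E.
Proof.
rewrite /klterm; have [->|a0] := eqVneq a 0; first by rewrite mul0r.
move=> a0' h; have : 0 < a by rewrite lt_def a0 a0'.
by move/h; rewrite lt_def => /andP[/negbTE -> _].
Qed.

Lemma klterm_noty a b : klterm a b != (-oo : \bar R)%E.
Proof. by rewrite /klterm; case: ifP => //; case: ifP. Qed.

Lemma klterm_wx (w x : R) : 0 <= w -> 0 <= x -> klterm (w * x) x = (w * x * ln w)%:E.
Proof.
move=> w0 x0; rewrite /klterm; have [->|wx0] := eqVneq (w * x) 0; first by rewrite mul0r.
have [x00|xn0] := eqVneq x 0; first by move: wx0; rewrite x00 mulr0 eqxx.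
by rewrite mulfK.
Qed.

Lemma kl_logsum (I : finType) (P : pred I) (a b : I -> R) :
  (forall i, 0 <= a i) -> (forall i, 0 <= b i) ->
  (klterm (\sum_(i | P i) a i) (\sum_(i | P i) b i) <= \sum_(i | P i) klterm (a i) (b i))%E.
Proof.
move=> a0 b0.
have [A0|Apos] := eqVneq (\sum_(i | P i) a i) 0.
  have ai0 : forall i, P i -> a i = 0.
    move=> i Pi; move/eqP: A0; rewrite psumr_eq0 // => /allP /(_ i (mem_index_enum i)).
    by rewrite Pi => /eqP.
  rewrite A0 [X in (_ <= X)%E]big1; first by rewrite /klterm eqxx.
  by move=> i Pi; rewrite ai0 // /klterm eqxx.
case: (pselect (exists i, P i /\ 0 < a i /\ b i = 0)) => [[i [Pi [ai bi]]]|H].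
  suff -> : (\sum_(i | P i) klterm (a i) (b i) = +oo)%E by rewrite leey.
  apply/eqP; rewrite esum_eqy; last by move=> j _; exact: klterm_noty.
  apply/existsP; exists i; apply/andP; split => //; rewrite /klterm bi eqxx /=.
  by rewrite (negbTE (lt0r_neq0 ai)).
have ab : forall i, P i -> 0 < a i -> 0 < b i.
  move=> i Pi ai; rewrite lt_def b0 andbT; apply/negP => /eqP bi.
  by apply: H; exists i.
have Ap : 0 < \sum_(i | P i) a i by rewrite lt_def Apos sumr_ge0.
have [L _] := logsum a0 b0 ab Ap.
rewrite (eq_bigr (fun i => (a i * ln (a i / b i))%:E)); last first.
  by move=> i Pi; rewrite klterm_fin //; exact: ab.
rewrite sumEFin klterm_fin ?sumr_ge0 //.
move=> _; have [i0 [Pi0 ai0]] : exists i, P i /\ 0 < a i.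
  apply/not_existsP => /= H'; move: Ap; rewrite lt_def => /andP[/negP nz _]; apply: nz.
  rewrite psumr_eq0 //; apply/allP => i _; apply/implyP => Pi.
  by rewrite eq_le a0 andbT leNgt; apply/negP => h; apply: (H' i).
by apply: (lt_le_trans (ab _ Pi0 ai0)); rewrite (bigD1 i0) //= lerDl sumr_ge0.
Qed.

End KL.


Section Gen.
Variables (C : Type) (ctype : C -> ty) (R : realType).

Lemma ind_decomp (mu : sent ctype -> R) (J : finType) (d : J -> sent ctype) (g : J -> bool) s :
  is_prob mu -> part d -> (forall M j, tr M (d j) -> tr M s = g j) ->
  mu s = \sum_(j | g j) mu (d j).
Proof.
move=> hmu Pd H; rewrite (decomp hmu s Pd) [RHS]big_mkcond /=; apply: eq_bigr => j _.
case: ifP => gj.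
  apply: mu_equiv => // M; rewrite trAnd; case E: (tr M (d j)); rewrite ?andbT ?andbF //.
  by rewrite (H M j E).
apply: mu_unsat => // M; rewrite trAnd; case E: (tr M (d j)); rewrite ?andbT ?andbF //.
by rewrite (H M j E) gj.
Qed.

Lemma kl_refine (mu xi : sent ctype -> R) (I J : finType) (c : I -> sent ctype)
  (d : J -> sent ctype) (r : J -> I) :
  is_prob mu -> is_prob xi -> part c -> part d ->
  (forall M j, tr M (d j) -> tr M (c (r j))) ->
  (\sum_i klterm (mu (c i)) (xi (c i)) <= \sum_j klterm (mu (d j)) (xi (d j)))%E.
Proof.
move=> hmu hxi Pc Pd H.
have E : forall (nu : sent ctype -> R), is_prob nu -> forall i, nu (c i) = \sum_(j | r j == i) nu (d j).
  move=> nu hnu i; apply: ind_decomp => // M j dj.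
  apply/idP/eqP => [ci|<-]; last exact: H.
  by apply: (proj1 Pc M); [exact: H|].
rewrite (partition_big r xpredT) //=; apply: lee_sum => i _.
rewrite (E mu hmu) (E xi hxi); apply: kl_logsum => j; exact: mu_ge0.
Qed.

End Gen.


Lemma trPsi_i C (ctype : C -> ty) (M : model ctype) m (f : 'I_m -> sent ctype) T i :
  tr M (psi f T) -> tr M (f i) = (i \in T).
Proof. by rewrite trPsi => /forallP /(_ i) /eqP. Qed.

Section Main.
Variables (R : realType) (C : Type) (ctype : C -> ty) (n : nat) (phi : 'I_n -> sent ctype)
  (mu0 : 'I_n -> R) (xi : sent ctype -> R) (lam : 'I_n -> \bar R).
Hypotheses (xi_prob : is_prob xi)
  (mu0_ext : exists mu : sent ctype -> R, is_prob mu /\ forall i, mu (phi i) = mu0 i)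
  (xi_pos : forall S : {set 'I_n}, satisfiable (psi phi S) -> 0 < xi (psi phi S))
  (lam_fin : forall j, lam j != +oo%E)
  (lam_sol : forall i : 'I_n,
      mu0 i = \sum_(S : {set 'I_n} | i \in S) wS xi phi lam S * xi (psi phi S)).

Local Notation w := (wS xi phi lam).
Local Notation Phi0 := (Phi xi phi lam).
Local Notation muh := (mu_hat xi phi lam).

Definition l j := fine (lam j).
Definition finS (S : {set 'I_n}) := [forall j in S, lam j != -oo%E].

Lemma expE_fin S : finS S -> expE (\sum_(j in S) lam j)%E = expR (\sum_(j in S) l j).
Proof.
move=> /forall_inP H; rewrite (eq_bigr (fun j => (l j)%:E)); last first.
  by move=> j jS; rewrite /l fineK // fin_numE H // lam_fin.
by rewrite sumEFin.
Qed.

Lemma expE_nfin S : ~~ finS S -> expE (\sum_(j in S) lam j)%E = 0.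
Proof.
move=> /forall_inPn [j jS /negPn /eqP lj].
have /eqP -> : (\sum_(j in S) lam j == -oo)%E.
  by rewrite esum_eqNy; apply/existsP; exists j; rewrite jS lj eqxx.
by [].
Qed.

Lemma expE_ge0 (x : \bar R) : 0 <= expE x.
Proof. by case: x => //= r; exact: expR_ge0. Qed.

Lemma Phi_ge0 : 0 <= Phi0.
Proof. by apply: sumr_ge0 => S _; rewrite mulr_ge0 ?expE_ge0 ?mu_ge0. Qed.

Lemma w_ge0 S : 0 <= w S.
Proof. by rewrite divr_ge0 ?expE_ge0 ?Phi_ge0. Qed.

Lemma w_nfin S : ~~ finS S -> w S = 0.
Proof. by move=> h; rewrite /wS expE_nfin // mul0r. Qed.

Lemma mu0_ninf j : lam j = -oo%E -> mu0 j = 0.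
Proof.
move=> lj; rewrite lam_sol big1 // => S jS; rewrite w_nfin ?mul0r //.
by apply/forall_inPn; exists j => //; rewrite lj.
Qed.

Lemma psi_phi M S i : tr M (psi phi S) -> tr M (phi i) = (i \in S).
Proof. exact: trPsi_i. Qed.

Lemma Phi_neq0 : Phi0 != 0.
Proof.
apply/negP => /eqP P0.
have mu00 : forall i, mu0 i = 0.
  by move=> i; rewrite lam_sol big1 // => S _; rewrite /wS P0 invr0 mulr0 mul0r.
case: (pselect (satisfiable (psi phi (finset.set0 : {set _})))) => [sat|nsat].
  have := xi_pos sat => h.
  have : xi (psi phi (finset.set0 : {set _})) <= Phi0.
    rewrite /Phi (bigD1 finset.set0) //= big_set0 /= expR0 mul1r lerDl.
    by apply: sumr_ge0 => S _; rewrite mulr_ge0 ?expE_ge0 ?mu_ge0.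
  by rewrite P0 => /(lt_le_trans h); rewrite ltxx.
case: mu0_ext => mu [hmu hmu0].
have : mu (sTop ctype) = 1 by apply: mu_valid => // M; exact: trTop.
rewrite (ind_decomp (d := psi phi) (g := xpredT) (s := sTop ctype) hmu (part_psi phi)); last first.
  by move=> M S _; rewrite trTop.
rewrite big1; first by move/esym/eqP; rewrite oner_eq0.
move=> S _.
have [->|/set0Pn [j jS]] := eqVneq S finset.set0.
  apply: mu_unsat => // M; apply/negP => h; apply: nsat; exists M; exact: h.
apply/eqP; rewrite eq_le mu_ge0 // andbT -(mu00 j) -(hmu0 j).
by apply: mu_le => // M h; rewrite (psi_phi j h).
Qed.

Lemma Phi_gt0 : 0 < Phi0.
Proof. by rewrite lt_def Phi_neq0 Phi_ge0. Qed.

Lemma w_fin S : finS S -> 0 < w S /\ ln (w S) = \sum_(j in S) l j - ln Phi0.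
Proof.
move=> h; rewrite /wS expE_fin //; split; first by rewrite divr_gt0 ?expR_gt0 ?Phi_gt0.
by rewrite ln_div ?posrE ?expR_gt0 ?Phi_gt0 // expRK.
Qed.

Lemma sum_w : \sum_(S : {set 'I_n}) w S * xi (psi phi S) = 1.
Proof.
rewrite (eq_bigr (fun S : {set 'I_n} => expE (\sum_(j in S) lam j)%E * xi (psi phi S) / Phi0)).
  by rewrite -mulr_suml divff // Phi_neq0.
by move=> S _; rewrite /wS mulrAC.
Qed.

Lemma muhat_cell s S0 : (forall M, tr M s -> tr M (psi phi S0)) -> muh s = w S0 * xi s.
Proof.
move=> H; rewrite /mu_hat (bigD1 S0) //= big1 ?addr0.
  congr (_ * _); apply: mu_equiv => // M; rewrite trAnd.
  by case E: (tr M s); rewrite ?andbT ?andbF // H.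
move=> S ne; rewrite (@mu_unsat _ _ _ xi) ?mulr0 // => M; rewrite trAnd.
apply/negP => /andP[h1 h2]; move/eqP: ne => ne; apply: ne.
exact: (proj1 (part_psi phi) M S S0 h2 (H M h1)).
Qed.

Lemma muhat_prob : is_prob muh.
Proof.
split.
- by move=> s; apply: sumr_ge0 => S _; rewrite mulr_ge0 ?w_ge0 ?mu_ge0.
- move=> s vs; rewrite /mu_hat -sum_w; apply: eq_bigr => S _; congr (_ * _).
  by apply: mu_equiv => // M; rewrite trAnd; have -> : tr M s by apply: vs.
- move=> s t D; rewrite /mu_hat -big_split /=; apply: eq_bigr => S _.
  rewrite -mulrDr; congr (_ * _).
  rewrite -mu_add //; last first.
    move=> M; rewrite !trAnd; have := D M; rewrite /truth -/(tr M _) trNot trAnd.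
    by case: (tr M s); case: (tr M t); case: (tr M (psi phi S)).
  by apply: mu_equiv => // M; rewrite !trAnd !trOr !trAnd andb_orl.
Qed.

Lemma muhat_phi i : muh (phi i) = mu0 i.
Proof.
rewrite lam_sol /mu_hat [RHS]big_mkcond /=; apply: eq_bigr => S _.
case: ifP => iS; first congr (_ * _).
  by apply: mu_equiv => // M; rewrite trAnd; case E: (tr M (psi phi S)); rewrite ?andbF ?andbT // (psi_phi i E).
rewrite (@mu_unsat _ _ _ xi) ?mulr0 // => M; rewrite trAnd; apply/negP => /andP[h1 h2].
by move: h1; rewrite (psi_phi i h2) iS.
Qed.

Definition K := \sum_(S : {set 'I_n}) w S * xi (psi phi S) * ln (w S).

Lemma K_eq : K = \sum_j l j * mu0 j - ln Phi0.
Proof.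
rewrite /K (eq_bigr (fun S : {set 'I_n} => w S * xi (psi phi S) * (\sum_(j in S) l j - ln Phi0))); last first.
  move=> S _; case: (boolP (finS S)) => h; first by rewrite (w_fin h).2.
  by rewrite w_nfin ?mul0r.
rewrite (eq_bigr (fun S : {set 'I_n} => \sum_j (if j \in S then w S * xi (psi phi S) * l j else 0)
   - w S * xi (psi phi S) * ln Phi0)); last first.
  move=> S _; rewrite mulrBr mulr_sumr; congr (_ - _).
  by rewrite big_mkcond.
rewrite sumrB -mulr_suml sum_w mul1r; congr (_ - _).
rewrite exchange_big /=; apply: eq_bigr => j _.
rewrite lam_sol mulr_sumr [RHS]big_mkcond /=; apply: eq_bigr => S _.
by case: ifP => // _; rewrite mulrC.
Qed.

Lemma K_eqE : (\sum_(i < n) (lam i * (mu0 i)%:E) - (ln Phi0)%:E)%E = K%:E.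
Proof.
rewrite K_eq EFinB -sumEFin; congr (_ - _)%E; apply: eq_bigr => j _.
rewrite /l; move: (lam_fin j) (@mu0_ninf j); case: (lam j) => [r| |] //= _ h.
by rewrite h // mule0 mul0r.
Qed.


Section KLsec.
Variables (e : nat -> sent ctype) (k : 'I_n -> nat).
Hypothesis (hk : forall i, e (k i) = phi i).
Hypothesis (e_enum : forall s : sent ctype, exists k, e k = s).

Definition cell m (T : {set 'I_m}) := psi (fun i : 'I_m => e i) T.
Definition m0 := (\max_(i < n) (k i).+1)%N.

Lemma k_lt m i : (m0 <= m)%N -> (k i < m)%N.
Proof. move=> h; apply: leq_trans h; rewrite /m0; exact: (@leq_bigmax _ (fun i => (k i).+1) i). Qed.

Definition Sof m (T : {set 'I_m}) : {set 'I_n} := [set i | [exists t in T, nat_of_ord t == k i]].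

Lemma cell_Sof m (hm : (m0 <= m)%N) M (T : {set 'I_m}) :
  tr M (cell T) -> tr M (psi phi (Sof T)).
Proof.
move=> h; rewrite trPsi; apply/forallP => i; rewrite -hk inE.
have := trPsi_i (Ordinal (k_lt i hm)) h => /= ->.
apply/eqP; apply/idP/idP => [tT|/existsP [t /andP [tT /eqP tk]]].
  by apply/existsP; exists (Ordinal (k_lt i hm)); rewrite tT /=.
by have -> : Ordinal (k_lt i hm) = t by apply: val_inj; rewrite /= tk.
Qed.

Lemma psi_Sof m (hm : (m0 <= m)%N) M (T : {set 'I_m}) S :
  tr M (cell T) -> tr M (psi phi S) = (Sof T == S).
Proof.
move=> h; have h' := cell_Sof hm h; apply/idP/eqP => [hS|<- //].
exact: (proj1 (part_psi phi) M _ _ h' hS).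
Qed.

Lemma KLpart_muhat m : (m0 <= m)%N -> KLpart e muh xi m = K%:E.
Proof.
move=> hm; rewrite /KLpart.
rewrite (eq_bigr (fun T : {set 'I_m} => (w (Sof T) * ln (w (Sof T)) * xi (cell T))%:E)); last first.
  move=> T _; rewrite -/(cell T) (@muhat_cell _ (Sof T)); last by move=> M; exact: cell_Sof.
  by rewrite klterm_wx ?w_ge0 ?mu_ge0 // mulrAC.
rewrite sumEFin; congr (_%:E).
rewrite (partition_big (@Sof m) xpredT) //=; apply: eq_bigr => S _.
rewrite (eq_bigr (fun T : {set 'I_m} => w S * ln (w S) * xi (cell T))); last first.
  by move=> T /eqP ->.
rewrite -mulr_sumr mulrAC; congr (_ * _).
rewrite (@ind_decomp _ _ _ xi _ (@cell m) (fun T => Sof T == S)) //; first exact: part_psi.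
by move=> M T h; exact: psi_Sof.
Qed.

Lemma KL_muhat : KL e muh xi = K%:E.
Proof.
rewrite /KL; apply: cvg_lim => //; apply: cvg_near_cst.
by exists m0 => // m /= hm; exact: KLpart_muhat.
Qed.

Definition restr m (T : {set 'I_m.+1}) : {set 'I_m} := [set i : 'I_m | widen_ord (leqnSn m) i \in T].

Lemma KLpart_nd mu : is_prob mu -> nondecreasing_seq (KLpart e mu xi).
Proof.
move=> hmu; apply/nondecreasing_seqP => m.
apply: (@kl_refine _ _ _ mu xi _ _ (@cell m) (@cell m.+1) (@restr m) hmu xi_prob (part_psi _) (part_psi _)).
move=> M T h; rewrite trPsi; apply/forallP => i; rewrite inE.
by have := trPsi_i (widen_ord (leqnSn m) i) h => /= ->.
Qed.

Lemma KL_ge mu m : is_prob mu -> (KLpart e mu xi m <= KL e mu xi)%E.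
Proof.
move=> hmu; rewrite /KL (cvg_lim _ (ereal_nondecreasing_cvgn (KLpart_nd hmu))) //.
by apply: ereal_sup_ubound; exists m.
Qed.


Lemma KL_strict mu : is_prob mu -> (forall i, mu (phi i) = mu0 i) -> mu <> muh ->
  (K%:E < KL e mu xi)%E.
Proof.
move=> hmu hmu0 ne.
have [s ns] : exists s, mu s != muh s.
  case: (pselect (exists s, mu s != muh s)) => // H; exfalso; apply: ne.
  apply: funext => s; apply/eqP; apply/negPn/negP => h; apply: H; by exists s.
have [k0 ek0] := e_enum s.
pose m := maxn m0 k0.+1.
have hm : (m0 <= m)%N by exact: leq_maxl.
have k0m : (k0 < m)%N by exact: leq_maxr.
pose t0 : 'I_m := Ordinal k0m.
have hmuh := muhat_prob.
have dec : forall nu : sent ctype -> R, is_prob nu -> nu s = \sum_(T : {set 'I_m} | t0 \in T) nu (cell T).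
  move=> nu hnu; apply: (@ind_decomp _ _ _ nu _ (@cell m) (fun T => t0 \in T) s hnu (part_psi _)) => M T h.
  by rewrite -ek0; have := trPsi_i t0 h => /= ->.
have [T0 neT0] : exists T : {set 'I_m}, mu (cell T) != muh (cell T).
  case: (pselect (exists T : {set 'I_m}, mu (cell T) != muh (cell T))) => // H.
  move: ns; rewrite (dec mu hmu) (dec _ hmuh).
  rewrite (eq_bigr (fun T => muh (cell T))) ?eqxx // => T _.
  by apply/eqP/negPn/negP => h; apply: H; exists T.
case: (pselect (exists T : {set 'I_m}, 0 < mu (cell T) /\ xi (cell T) = 0)).
  move=> [T [aT xT]].
  have -> : KL e mu xi = +oo%E.
    apply/eqP; rewrite eq_le leey /=; apply: le_trans (KL_ge m hmu).
    rewrite leye_eq /KLpart esum_eqy; last by move=> j _; exact: klterm_noty.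
    apply/existsP; exists T; rewrite /= -/(cell T) /klterm xT eqxx.
    by rewrite (negbTE (lt0r_neq0 aT)).
  exact: ltry.
move=> H.
have hxi : forall T : {set 'I_m}, 0 < mu (cell T) -> 0 < xi (cell T).
  move=> T aT; rewrite lt_def mu_ge0 // andbT; apply/eqP => x0; apply: H; by exists T.
have hw : forall T : {set 'I_m}, 0 < mu (cell T) -> finS (Sof T).
  move=> T aT; apply/negPn/negP => /forall_inPn [j jS /negPn /eqP lj].
  have := mu0_ninf lj; rewrite -hmu0.
  rewrite (@ind_decomp _ _ _ mu _ (@cell m) (fun T => j \in Sof T)) //; last 2 first.
  - exact: part_psi.
  - by move=> M T' h; exact: psi_phi (cell_Sof hm h).
  move/eqP; rewrite psumr_eq0; last by move=> T' _; exact: mu_ge0.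
  move/allP => /(_ T (mem_index_enum T)); rewrite jS /= => /eqP a0.
  by move: aT; rewrite a0 ltxx.
have hnuE : forall T : {set 'I_m}, muh (cell T) = w (Sof T) * xi (cell T).
  by move=> T; apply: muhat_cell => M; exact: cell_Sof.
have hnu : forall T : {set 'I_m}, 0 < mu (cell T) -> 0 < muh (cell T).
  by move=> T aT; rewrite hnuE mulr_gt0 ?hxi // (w_fin (hw T aT)).1.
have E1 : KLpart e mu xi m = (\sum_(T : {set 'I_m}) mu (cell T) * ln (mu (cell T) / xi (cell T)))%:E.
  rewrite /KLpart -sumEFin; apply: eq_bigr => T _; rewrite -/(cell T) klterm_fin ?mu_ge0 //.
  exact: hxi.
have E2 : \sum_(T : {set 'I_m}) mu (cell T) * ln (mu (cell T) / xi (cell T)) =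
   \sum_(T : {set 'I_m}) mu (cell T) * ln (mu (cell T) / muh (cell T)) +
   \sum_(T : {set 'I_m}) mu (cell T) * ln (w (Sof T)).
  rewrite -big_split /=; apply: eq_bigr => T _.
  have [a0|aT] := eqVneq (mu (cell T)) 0; first by rewrite a0 !mul0r addr0.
  have aT' : 0 < mu (cell T) by rewrite lt_def aT mu_ge0.
  have wp := (w_fin (hw T aT')).1.
  have xp := hxi _ aT'.
  rewrite -mulrDr; congr (_ * _); rewrite hnuE (ln_div aT' (mulr_gt0 wp xp)) (lnM wp xp) (ln_div aT' xp).
  ring.
have E3 : \sum_(T : {set 'I_m}) mu (cell T) * ln (w (Sof T)) = K.
  rewrite K_eq.
  rewrite (eq_bigr (fun T : {set 'I_m} => \sum_j (if j \in Sof T then mu (cell T) * l j else 0)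
     - mu (cell T) * ln Phi0)); last first.
    move=> T _; have [a0|aT] := eqVneq (mu (cell T)) 0.
      by rewrite a0 !mul0r big1 ?subr0 // => j _; rewrite mul0r; case: ifP.
    have aT' : 0 < mu (cell T) by rewrite lt_def aT mu_ge0.
    rewrite (w_fin (hw T aT')).2 mulrBr mulr_sumr; congr (_ - _).
    by rewrite big_mkcond.
  rewrite sumrB -mulr_suml.
  have -> : \sum_(T : {set 'I_m}) mu (cell T) = 1.
    rewrite -(mu_valid hmu (s := sTop ctype)); last by move=> M; exact: trTop.
    rewrite (ind_decomp (d := @cell m) (g := xpredT) (s := sTop ctype) hmu (part_psi _)) //.
    by move=> M T _; rewrite trTop.
  rewrite mul1r; congr (_ - _); rewrite exchange_big /=; apply: eq_bigr => j _.
  rewrite -hmu0 (@ind_decomp _ _ _ mu _ (@cell m) (fun T => j \in Sof T)) //; last 2 first.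
  - exact: part_psi.
  - by move=> M T' h; exact: psi_phi (cell_Sof hm h).
  rewrite mulr_sumr [RHS]big_mkcond /=; apply: eq_bigr => T _.
  by case: ifP => // _; rewrite mulrC.
have G : 0 < \sum_(T : {set 'I_m}) mu (cell T) * ln (mu (cell T) / muh (cell T)).
  have A1 : \sum_(T : {set 'I_m}) mu (cell T) = 1.
    rewrite -(mu_valid hmu (s := sTop ctype)); last by move=> M; exact: trTop.
    rewrite (ind_decomp (d := @cell m) (g := xpredT) (s := sTop ctype) hmu (part_psi _)) //.
    by move=> M T _; rewrite trTop.
  have B1 : \sum_(T : {set 'I_m}) muh (cell T) = 1.
    rewrite -(mu_valid hmuh (s := sTop ctype)); last by move=> M; exact: trTop.
    rewrite (ind_decomp (d := @cell m) (g := xpredT) (s := sTop ctype) hmuh (part_psi _)) //.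
    by move=> M T _; rewrite trTop.
  have Ap : 0 < \sum_(T : {set 'I_m}) mu (cell T) by rewrite A1 ltr01.
  have [_ L] := @logsum R _ xpredT (fun T => mu (cell T)) (fun T => muh (cell T))
     (fun T => mu_ge0 hmu _) (fun T => mu_ge0 hmuh _) (fun T _ => hnu T) Ap.
  move: L; rewrite /= A1 B1 divr1 ln1 mulr0; apply.
  by exists T0; rewrite !mulr1.
apply: (lt_le_trans _ (KL_ge m hmu)); rewrite E1 lte_fin E2 E3 ltrDr.
exact: G.
Qed.

End KLsec.

End Main.

Theorem mainTheorem5 (R : realType) (C : Type) (ctype : C -> ty)
  (Ccount : countable_alphabet C)
  (n : nat) (phi : 'I_n -> sent ctype) (mu0 : 'I_n -> R)
  (mu0_01 : forall i, 0 <= mu0 i <= 1)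
  (xi : sent ctype -> R) (xi_prob : is_prob xi)
  (mu0_ext : exists mu : sent ctype -> R, is_prob mu /\ forall i, mu (phi i) = mu0 i)
  (xi_pos : forall S : {set 'I_n}, satisfiable (psi phi S) -> 0 < xi (psi phi S))
  (lam : 'I_n -> \bar R) (lam_fin : forall j, lam j != +oo%E)
  (lam_sol : forall i : 'I_n,
      mu0 i = \sum_(S : {set 'I_n} | i \in S) wS xi phi lam S * xi (psi phi S))
  (e : nat -> sent ctype) (e_enum : forall s : sent ctype, exists k, e k = s) :
  let muhat := mu_hat xi phi lam in
  [/\ is_prob muhat,
      (forall i, muhat (phi i) = mu0 i),
      (forall mu : sent ctype -> R, is_prob mu -> (forall i, mu (phi i) = mu0 i) ->
          mu <> muhat -> (KL e muhat xi < KL e mu xi)%E),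
      KL e muhat xi =
        (\sum_(S : {set 'I_n}) klterm (muhat (psi phi S)) (xi (psi phi S)))%E
    & KL e muhat xi =
        (\sum_(i < n) (lam i * (mu0 i)%:E) - (ln (Phi xi phi lam))%:E)%E].
Proof.
move=> muhat.
have [k hk] : {k : 'I_n -> nat & forall i, e (k i) = phi i}.
  by apply: (boolp.choice (P := fun (i : 'I_n) (x : nat) => e x = phi i)) => i; exact: e_enum.
have KLm := KL_muhat lam xi_prob hk.
split.
- exact: (muhat_prob xi_prob mu0_ext xi_pos lam_sol).
- move=> i; exact: (muhat_phi xi_prob lam_sol).
- move=> mu hmu hmu0 ne; rewrite /muhat KLm.
  exact: (KL_strict xi_prob mu0_ext xi_pos lam_fin lam_sol hk e_enum hmu hmu0 ne).
- rewrite /muhat KLm /K -sumEFin; apply: eq_bigr => S _.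
  rewrite (muhat_cell lam xi_prob (S0 := S)) //.
  by rewrite klterm_wx ?(w_ge0 phi lam xi_prob) ?mu_ge0.
- by rewrite /muhat KLm (K_eqE xi_prob mu0_ext xi_pos lam_fin lam_sol).
Qed.
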